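(* Let $G$ act on a countable set $X$, $R\subseteq G$ a subgroup, and $(b,c)$ a connected graph over $X$ such that $H=H_{b,c}$ is $R$-invariant. Then for all $x,y\in X$ there exists $C_{x,y}>0$ such that $T_gf(x)\ge C_{x,y}\,T_gf(y)$ for every $f\in\mathcal{S}^+$ and every $g\in R$.
   Context: A graph over $X$ is $(b,c)$ with $b:X\times X\to[0,\infty)$, $c:X\to\mathbb{R}$, $\sum_yb(x,y)<\infty$ ($b$ need not be symmetric); connected: any $x,z$ are joined by a finite sequence $y_1,\dots,y_n$ with $b(y_i,y_{i+1})>0$. $H_{b,c}f(x)=\sum_yb(x,y)(f(x)-f(y))+c(x)f(x)$ on $\mathrm{Dom}(H)=\{f:\sum_yb(x,y)|f(y)|<\infty\ \forall x\}$. $\mathcal{S}^+$ is the set of nonnegative, not identically zero $f\in\mathrm{Dom}(H)$ with $Hf\ge0$. $T_gf(x)=f(g^{-1}x)$; $H$ is $R$-invariant if $T_g$ preserves $\mathrm{Dom}(H)$ and $HT_g=T_gH$ for $g\in R$. *)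

(* Defs.v *)
From HB Require Import structures.
From mathcomp Require Import all_boot all_order all_algebra.
From mathcomp Require Import all_classical all_reals all_analysis.
Set Implicit Arguments. Unset Strict Implicit. Unset Printing Implicit Defensive.
Import Order.TTheory GRing.Theory Num.Theory.
Local Open Scope classical_set_scope.
Local Open Scope ring_scope.

Record group_action (G X : Type) := GroupAction {
  gmul : G -> G -> G;
  ginv : G -> G;
  gone : G;
  gact : G -> X -> X;
  gmulA : forall a b c, gmul a (gmul b c) = gmul (gmul a b) c;
  gmul1g : forall a, gmul gone a = a;
  gmulVg : forall a, gmul (ginv a) a = gone;
  gact1 : forall x, gact gone x = x;
  gactM : forall a b x, gact (gmul a b) x = gact a (gact b x)
}.

Definition subgroup (G X : Type) (A : group_action G X) (S : set G) : Prop :=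
  S (gone A) /\ (forall a b, S a -> S b -> S (gmul A a b)) /\
  (forall a, S a -> S (ginv A a)).

Definition Tg (G X : Type) (R : realType) (A : group_action G X) (g : G)
  (f : X -> R) : X -> R := fun x => f (gact A (ginv A g) x).

Section Graphs.
Variables (R : realType) (X : countType).

(* sum over X of a real family (meaningful for absolutely summable families):
   sum of positive parts minus sum of negative parts *)
Definition xsum (a : X -> R) : R :=
  fine (\esum_(y in [set: X]) (Num.max (a y) 0)%:E) -
  fine (\esum_(y in [set: X]) (Num.max (- a y) 0)%:E).

Definition is_graph (b : X -> X -> R) (c : X -> R) : Prop :=
  (forall x y, 0 <= b x y) /\
  (forall x, summable [set: X] (fun y => (b x y)%:E)).

Definition connected_graph (b : X -> X -> R) : Prop :=
  forall x z, exists s : seq X, path (fun u v => 0 < b u v) x s /\ last x s = z.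

Definition DomH (b : X -> X -> R) (f : X -> R) : Prop :=
  forall x, summable [set: X] (fun y => (b x y * `|f y|)%:E).

Definition Hop (b : X -> X -> R) (c : X -> R) (f : X -> R) : X -> R :=
  fun x => xsum (fun y => b x y * (f x - f y)) + c x * f x.

Definition Splus (b : X -> X -> R) (c : X -> R) (f : X -> R) : Prop :=
  (forall x, 0 <= f x) /\ (exists x, f x != 0) /\ DomH b f /\
  (forall x, 0 <= Hop b c f x).

End Graphs.

Definition H_invariant (G : Type) (R : realType) (X : countType)
  (A : group_action G X) (S : set G) (b : X -> X -> R) (c : X -> R) : Prop :=
  forall g, S g ->
    (forall f, DomH b f -> DomH b (Tg A g f)) /\
    (forall f, DomH b f -> forall x, Hop b c (Tg A g f) x = Tg A g (Hop b c f) x).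

(* Main.v *)
Require Import Defs.
From HB Require Import structures.
From mathcomp Require Import all_boot all_order all_algebra.
From mathcomp Require Import all_classical all_reals all_analysis.
From mathcomp Require Import lra.
Import Order.TTheory GRing.Theory Num.Theory.
Local Open Scope classical_set_scope.
Local Open Scope ring_scope.
Lemma esum_scale_le (R : realType) (T : choiceType) (k : R) (a : T -> \bar R) :
  0 <= k -> (forall i, (0 <= a i)%E) ->
  (\esum_(i in [set: T]) (k%:E * a i) <= k%:E * \esum_(i in [set: T]) a i)%E.
Proof.
move=> k0 a0; rewrite ge_ereal_sup => //= _ [X [finX XI]] <-.
rewrite -ge0_mule_fsumr //; apply: lee_wpmul2l; first by rewrite lee_fin.
by apply: esum_ge; exists X.
Qed.

Lemma esum_fin_le (R : realType) (T : choiceType) (a : T -> \bar R) (r : R) :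
  (forall i, (0 <= a i)%E) -> (\esum_(i in [set: T]) a i <= r%:E)%E ->
  (fine (\esum_(i in [set: T]) a i) <= r) /\ (\esum_(i in [set: T]) a i \is a fin_num).
Proof.
move=> a0 le.
have h0 : (0 <= \esum_(i in [set: T]) a i)%E by apply: esum_ge0.
have hf : (\esum_(i in [set: T]) a i \is a fin_num).
  by rewrite ge0_fin_numE // (le_lt_trans le) // ltry.
split=> //; by rewrite -lee_fin fineK.
Qed.
Lemma edge (R : realType) (X : countType) (b : X -> X -> R) (c : X -> R) (u v : X) :
  is_graph b c ->
  forall f : X -> R, (forall x, 0 <= f x) -> DomH b f -> 0 <= Hop b c f u ->
  b u v * f v <= (fine (\esum_(y in [set: X]) (b u y)%:E) + b u v + c u) * f u.
Proof.
move=> [b0 bs] f f0 fD H.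
set D := fine _.
have hD : (\esum_(y in [set: X]) (b u y)%:E)%E = D%:E.
  rewrite /D fineK //.
  have -> : (\esum_(y in [set: X]) (b u y)%:E)%E = (\esum_(y in [set: X]) `|(b u y)%:E|)%E.
    by apply: eq_esum => i _; rewrite gee0_abs // lee_fin.
  by rewrite -summableE.
move: H; rewrite /Hop /xsum.
set a := fun y => b u y * (f u - f y).
have P : fine (\esum_(y in [set: X]) (Num.max (a y) 0)%:E) <= f u * D.
  apply: (proj1 (@esum_fin_le R X (fun y => (Num.max (a y) 0)%:E) (f u * D) _ _)); first by move=> i; rewrite lee_fin le_max lexx orbT.
  apply: (le_trans (y := (\esum_(i in [set: X]) ((f u)%:E * (b u i)%:E))%E)).
    apply: le_esum => i _; rewrite -EFinM lee_fin ge_max; apply/andP; split.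
      by rewrite mulrC /a ler_wpM2l // lerBlDr lerDl.
    by rewrite mulr_ge0.
  by rewrite EFinM -hD; apply: esum_scale_le => // i; rewrite lee_fin.
have fN : (\esum_(y in [set: X]) (Num.max (- a y) 0)%:E \is a fin_num)%E.
  have := fD u; rewrite /summable => fs.
  rewrite ge0_fin_numE; last by apply: esum_ge0 => i _; rewrite lee_fin le_max lexx orbT.
  apply: le_lt_trans fs; apply: le_esum => i _.
  rewrite gee0_abs; last by rewrite lee_fin mulr_ge0.
  rewrite lee_fin ge_max; apply/andP; split; last by rewrite mulr_ge0.
  rewrite /a ger0_norm // -mulrN opprB ler_wpM2l // lerBlDr lerDl //.
have N : b u v * (f v - f u) <= fine (\esum_(y in [set: X]) (Num.max (- a y) 0)%:E).
  rewrite -lee_fin fineK //; apply: esum_ge; exists [set v].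
    by split; [exact: finite_set1 | done].
  rewrite fsbig_set1 lee_fin le_max /a -mulrN opprB lexx //.
move=> H.
nra.
Qed.

Definition Pgood (R : realType) (X : countType) (b : X -> X -> R) (c : X -> R) (f : X -> R) :=
  (forall x, 0 <= f x) /\ DomH b f /\ (forall x, 0 <= Hop b c f x).
Arguments Pgood {R X}.

Lemma chain (R : realType) (X : countType) (b : X -> X -> R) (c : X -> R) :
  is_graph b c -> forall (s : seq X) (u : X), path (fun u v => 0 < b u v) u s ->
  exists C : R, 0 < C /\ forall f, Pgood b c f -> C * f (last u s) <= f u.
Proof.
move=> hg; elim=> [|v s IH] u /=.
  by move=> _; exists 1; split => // f _; rewrite mul1r.
move=> /andP[buv /IH [C [C0 HC]]].
set K := fine (\esum_(y in [set: X]) (b u y)%:E) + b u v + c u.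
set M := Num.max K 1.
have M0 : 0 < M by rewrite lt_max ltr01 orbT.
exists (b u v / M * C); split; first by rewrite !mulr_gt0 // invr_gt0.
move=> f [f0 [fD fH]].
have e := @edge R X b c u v hg f f0 fD (fH u).
have e2 : b u v * f v <= M * f u.
  apply: le_trans e _; apply: ler_wpM2r => //; rewrite le_max lexx //.
have := HC f (conj f0 (conj fD fH)) => h.
have e3 : b u v / M * f v <= f u.
  by rewrite mulrAC ler_pdivrMr // [f u * _]mulrC.
apply: le_trans e3; rewrite -mulrA ler_wpM2l //.
by rewrite mulr_ge0 // ltW // invr_gt0.
Qed.

Theorem lemma2 (R : realType) (G : Type) (X : countType)
  (A : group_action G X) (S : set G) (b : X -> X -> R) (c : X -> R) :
  subgroup A S -> is_graph b c -> connected_graph b ->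
  H_invariant A S b c ->
  forall x y : X, exists C : R, 0 < C /\
    forall f : X -> R, Splus b c f -> forall g, S g ->
      Tg A g f x >= C * Tg A g f y.
Proof.
move=> _ hg hc hi x y.
have [s [hp hl]] := hc x y.
have [C [C0 HC]] := @chain R X b c hg s x hp.
exists C; split => // f [f0 [_ [fD fH]]] g Sg.
have [hD hH] := hi g Sg.
rewrite -hl; apply: HC; split; first by move=> z; rewrite /Tg.
split; first exact: hD.
by move=> z; rewrite hH // /Tg.
Qed.
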